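(* For every even $n\ge2$, every integer $r\ge0$, every $p\in(0,1)$ and every graph $G$ of order $n$, $$\mathcal A_r(G)\le (4n)^{3n/2-1}\,p^{\frac{r}{4n}}\,N^{-d(G)}.$$
   Context: Fix $p\in(0,1)$ and $N:=1/(1-p)$. Trees. A 2-rooted ternary tree of order $n$ is a finite plane tree $U$ with a root vertex of degree 2 and $n$ true vertices of degree 4; each edge is internal or a leaf (half-edge). Each true vertex $v$ has parent edge $e_1(v)$ (towards the root) and ordered children edges $e_2(v),e_3(v),e_4(v)$. One root edge has type $\alpha$, the other $\bar\alpha$; if $e_1(v)$ has type $\tau$ then $e_2(v)$ has the other type and $e_3(v),e_4(v)$ have type $\tau$. Leaves of type $\alpha$ are leaves, of type $\bar\alpha$ anti-leaves ($n+1$ each). A heap-ordering labels true vertices bijectively by $\{1,\dots,n\}$, increasing from parent to child. Graphs. For even $n$, a graph of order $n$ is $G=(U,w,w')$: $U$ heap-ordered; $w$ a bijection leaves $\to$ anti-leaves (dashed edges; internal edges are solid); $w'$ a partition of true vertices into $n/2$ pairs (wavy edges) with, for each pair $\{v,v'\}$ ($v$ of smaller label), one of eight propagators in $(S,j,k)=(S_v,j_v,k_v)$, $(S',j',k')=(S_{v'},j_{v'},k_{v'})$: $\delta_{jj'}\delta_{kk'}$, $\delta_{j,S-j'}\delta_{kk'}$, $\delta_{jj'}\delta_{k,S-k'}$, $\delta_{j,S-j'}\delta_{k,S-k'}$, $\delta_{jk'}\delta_{kj'}$, $\delta_{j,S-k'}\delta_{kj'}$, $\delta_{jk'}\delta_{k,S-j'}$,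 $\delta_{j,S-k'}\delta_{k,S-j'}$, together with $S=S'$. Amplitude. A momentum attribution gives each true vertex $S_v\ge0$, $0\le j_v,k_v\le S_v$ and momenta $j_v,S_v-j_v,k_v,S_v-k_v$ to the ends at $v$ of $e_1,\dots,e_4$. For $r\in\mathbb N$ it is admissible if solid edges get equal momenta at both ends, both root edges carry momentum $r$, every dashed edge $e$ joins leaves of equal momentum $m(e)$, and every wavy edge satisfies $S_v=S_{v'}$ and its propagator. $\mathcal A_r(G):=N^{-n}\sum_{\text{admissible}}\prod_{e\text{ dashed}}p^{m(e)}$. Faces and degree. Call the edge-ends at true vertices and at the root slots. Each propagator of a wavy edge $\{v,v'\}$, with $S=S'$, identifies each of $j,S-j,k,S-k$ of $v$ with one momentum of $v'$, hence pairs each slot of $v$ with a slot of $v'$; these four pairs are the corners of that wavy edge. Let $\Gamma$ be the graph on the slots whose edges are the solid and dashed edges of $G$, the corners, and one extra edge joining the two root slots; its connected components (cycles) are the faces, $F(G)$ their number. Let $E$ be the $(n/2)\times F(G)$ matrix with rows indexed by wavy edges $\omega=\{v,v'\}$ ($v$ of smaller label), columns by faces, $E_{\omega f}$ = (number of corners of $\omega$ in $f$ containing $e_1(v)$ or $e_2(v)$) minus (number of corners of $\omega$ in $f$ containing $e_3(v)$ or $e_4(v)$). $R(G)=\operatorname{rank}E$, and $d(G):=n-F(G)+R(G)+1$. *)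

(* Defs.v *)
From HB Require Import structures.
From mathcomp Require Import all_boot all_order all_algebra.
From mathcomp Require Import classical_sets reals constructive_ereal ereal esum exp.
Set Implicit Arguments. Unset Strict Implicit. Unset Printing Implicit Defensive.
Import Order.TTheory GRing.Theory Num.Theory.

(* Slots (edge-ends).  A true vertex is a label v : 'I_n (heap labels   *)
(* 1..n are represented by 0..n-1).  Slots are:                         *)
(*   Rt b     : end of a root edge at the root; b = true  <-> type alpha, *)
(*                                              b = false <-> anti-alpha. *)
(*   At v i   : end at the true vertex v of the edge e_{i+1}(v),        *)
(*              i : 'I_4  (i = 0 : parent edge e_1, i = 1,2,3 : e_2,e_3,e_4). *)
Definition slot (n : nat) : finType := (bool + ('I_n * 'I_4))%type.
Definition Rt {n} (b : bool) : slot n := inl b.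
Definition At {n} (v : 'I_n) (i : 'I_4) : slot n := inr (v, i).

(* A graph of order n.
   - par v     : the slot to which the parent edge e_1(v) is attached
                 (a root slot, or a child slot At u i with i >= 1); this
                 encodes the heap-ordered 2-rooted ternary plane tree.
   - tau v     : the type of e_1(v) (true = alpha); it is determined by
                 the tree and constrained in [graph_wf].
   - dsh       : the map w from leaves to anti-leaves (dashed edges).
   - mate      : the pairing w' of true vertices (wavy edges).
   - prop v    : for v the smaller label of its pair, the index (0..7)
                 of the propagator of the wavy edge {v, mate v}, in the
                 order in which the eight propagators are listed.       *)
Record graph (n : nat) := Graph {
  par  : 'I_n -> slot n;
  tau  : 'I_n -> bool;
  dsh  : slot n -> slot n;
  mate : 'I_n -> 'I_n;
  prop : 'I_n -> 'I_8 }.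

Section Graphs.
Variables (n : nat) (G : graph n).

Definition slot_type (s : slot n) : bool :=
  match s with
  | inl b => b
  | inr (v, i) => if val i == 1%N then ~~ tau G v else tau G v
  end.

Definition hang_slot (s : slot n) : bool :=
  match s with inl _ => true | inr (_, i) => val i != 0%N end.

(* leaves: edges e_2..e_4 / root edges to which no true vertex is attached;
   a leaf is identified with its unique end *)
Definition is_halfedge (s : slot n) : bool :=
  hang_slot s && [forall v, par G v != s].
Definition is_leaf (s : slot n) : bool := is_halfedge s && slot_type s.
Definition is_antileaf (s : slot n) : bool := is_halfedge s && ~~ slot_type s.

Definition graph_wf : Prop :=
  (forall v, hang_slot (par G v)) /\
  (forall (v u : 'I_n) i, par G v = At u i -> (u < v)%N) /\
  (forall v v', par G v = par G v' -> v = v') /\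
  (forall v, tau G v = slot_type (par G v)) /\
  (forall s, is_leaf s -> is_antileaf (dsh G s)) /\
  (forall s s', is_leaf s -> is_leaf s' -> dsh G s = dsh G s' -> s = s') /\
  (forall t, is_antileaf t -> exists2 s, is_leaf s & dsh G s = t) /\
  (forall v, mate G v != v) /\
  (forall v, mate G (mate G v) = v).

Definition attribution := {ffun 'I_n -> nat * nat * nat}.
Definition aS (a : attribution) v := (a v).1.1.
Definition aj (a : attribution) v := (a v).1.2.
Definition ak (a : attribution) v := (a v).2.

Definition mom (r : nat) (a : attribution) (s : slot n) : nat :=
  match s with
  | inl _ => r
  | inr (v, i) =>
      match val i with
      | 0 => aj a v
      | 1 => aS a v - aj a v
      | 2 => ak a v
      | _ => aS a v - ak a v
      end
  end.

Definition prop_ok (c : 'I_8) (S j k j' k' : nat) : bool :=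
  match val c with
  | 0 => (j == j') && (k == k')
  | 1 => (j == S - j') && (k == k')
  | 2 => (j == j') && (k == S - k')
  | 3 => (j == S - j') && (k == S - k')
  | 4 => (j == k') && (k == j')
  | 5 => (j == S - k') && (k == j')
  | 6 => (j == k') && (k == S - j')
  | _ => (j == S - k') && (k == S - j')
  end.

Definition admissible (r : nat) (a : attribution) : Prop :=
  (forall v : 'I_n, aj a v <= aS a v /\ ak a v <= aS a v)%N /\
  (forall v, mom r a (At v ord0) = mom r a (par G v)) /\
  (forall s, is_leaf s -> mom r a s = mom r a (dsh G s)) /\
  (forall v : 'I_n, (v < mate G v)%N ->
     aS a v = aS a (mate G v) /\
     prop_ok (prop G v) (aS a v) (aj a v) (ak a v)
             (aj a (mate G v)) (ak a (mate G v))).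

Variable R : realType.

Definition Nof (p : R) : R := (1 - p)^-1.

Definition amplitude (p : R) (r : nat) : \bar R :=
  (((Nof p) ^- n)%:E *
   esum [set a : attribution | admissible r a]
      (fun a => (\prod_(s : slot n | is_leaf s) p ^+ mom r a s)%:E))%E.

(* index (0..3, standing for j, S-j, k, S-k / e_1..e_4) of the momentum of
   v' identified by propagator c with the momentum of index i of v *)
Definition corner_idx (c : 'I_8) (i : 'I_4) : 'I_4 :=
  inord (nth 0%N (nth [::] [:: [:: 0; 1; 2; 3]; [:: 1; 0; 2; 3];
                               [:: 0; 1; 3; 2]; [:: 1; 0; 3; 2];
                               [:: 2; 3; 0; 1]; [:: 3; 2; 0; 1];
                               [:: 2; 3; 1; 0]; [:: 3; 2; 1; 0]]%N (val c))
                 (val i)).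

Definition gam0 (s t : slot n) : bool :=
  [exists v : 'I_n, (s == At v ord0) && (t == par G v)] ||
  (is_leaf s && (t == dsh G s)) ||
  [exists v : 'I_n, exists i : 'I_4, [&& (v < mate G v)%N, s == At v i &
                          t == At (mate G v) (corner_idx (prop G v) i)]] ||
  ((s == Rt true) && (t == Rt false)).

Definition gam : rel (slot n) := fun s t => gam0 s t || gam0 t s.

Definition faces : {set {set slot n}} :=
  [set [set t | connect gam s t] | s : slot n].
Definition F_G : nat := #|faces|.

(* wavy edges, indexed by their smaller vertex *)
Definition wavy : {set 'I_n} := [set v : 'I_n | (v < mate G v)%N].

Definition Eentry (v : 'I_n) (f : {set slot n}) : R :=
  \sum_(i < 4 | At v i \in f) (if (val i < 2)%N then 1 else -1).

Definition Emat : 'M[R]_(#|wavy|, #|faces|) :=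
  \matrix_(w < #|wavy|, f < #|faces|) Eentry (enum_val w) (enum_val f).

Definition R_G : nat := \rank Emat.

Definition degree : int := (n%:Z - F_G%:Z + R_G%:Z + 1)%R.

End Graphs.

(* Main.v *)
Require Import Defs.
From HB Require Import structures.
From mathcomp Require Import all_boot all_order all_algebra.
From mathcomp Require Import classical_sets reals constructive_ereal ereal esum exp.
From mathcomp Require Import zify ring lra.
Import Order.TTheory GRing.Theory Num.Theory.
Set Implicit Arguments. Unset Strict Implicit. Unset Printing Implicit Defensive.
Local Open Scope ring_scope.
From mathcomp Require Import fsbigop cardinality finmap.
Definition momi (S j k : nat) (i : 'I_4) : nat :=
  match val i with 0 => j | 1 => S - j | 2 => k | _ => S - k end%N.

Lemma corner_ok (c : 'I_8) (S j k j' k' : nat) (i : 'I_4) :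
  (j <= S)%N -> (k <= S)%N -> (j' <= S)%N -> (k' <= S)%N ->
  prop_ok c S j k j' k' -> momi S j k i = momi S j' k' (corner_idx c i).
Proof.
move=> hj hk hj' hk'.
case: c => [[|[|[|[|[|[|[|[|c]]]]]]]] Hc] //;
case: i => [[|[|[|[|i]]]] Hi] //;
rewrite /prop_ok /corner_idx /momi /= inordK //= => /andP[/eqP e1 /eqP e2]; lia.
Qed.

Section Main.
Variables (n : nat) (G : graph n).
Hypothesis wf : graph_wf G.

Lemma wf_hang v : hang_slot (par G v). Proof. by case: wf. Qed.
Lemma wf_heap (v u : 'I_n) i : par G v = At u i -> (u < v)%N.
Proof. by case: wf => _ [h _]; apply: h. Qed.
Lemma wf_parinj v v' : par G v = par G v' -> v = v'.
Proof. by case: wf => _ [_ [h _]]; apply: h. Qed.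
Lemma wf_tau v : tau G v = slot_type G (par G v).
Proof. by case: wf => _ [_ [_ [h _]]]; apply: h. Qed.
Lemma wf_dl s : is_leaf G s -> is_antileaf G (dsh G s).
Proof. by case: wf => _ [_ [_ [_ [h _]]]]; apply: h. Qed.
Lemma wf_dinj s s' : is_leaf G s -> is_leaf G s' -> dsh G s = dsh G s' -> s = s'.
Proof. by case: wf => _ [_ [_ [_ [_ [h _]]]]]; apply: h. Qed.
Lemma wf_dsurj t : is_antileaf G t -> exists2 s, is_leaf G s & dsh G s = t.
Proof. by case: wf => _ [_ [_ [_ [_ [_ [h _]]]]]]; apply: h. Qed.
Lemma wf_mate1 v : mate G v != v.
Proof. by case: wf => _ [_ [_ [_ [_ [_ [_ [h _]]]]]]]; apply: h. Qed.
Lemma wf_mate2 v : mate G (mate G v) = v.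
Proof. by case: wf => _ [_ [_ [_ [_ [_ [_ [_ h]]]]]]]; apply: h. Qed.

Variables (r : nat) (a : attribution n).
Hypothesis adm : admissible G r a.

Lemma momAt (v : 'I_n) (i : 'I_4) : mom r a (At v i) = momi (aS a v) (aj a v) (ak a v) i.
Proof. by []. Qed.

Lemma adm_le (v : 'I_n) : (aj a v <= aS a v)%N /\ (ak a v <= aS a v)%N.
Proof. by case: adm => h _; apply: h. Qed.

Lemma mom_le_S (v : 'I_n) (i : 'I_4) : (mom r a (At v i) <= aS a v)%N.
Proof.
rewrite momAt /momi; case: (adm_le v) => h1 h2.
case: i => [[|[|[|[|i]]]] Hi] //=; lia.
Qed.

Lemma mom_corner (v : 'I_n) (i : 'I_4) : (v < mate G v)%N ->
  mom r a (At v i) = mom r a (At (mate G v) (corner_idx (prop G v) i)).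
Proof.
move=> hv; case: adm => h1 [_ [_ h4]]; case: (h4 v hv) => eS hp.
rewrite !momAt -eS; apply: corner_ok => //; try (by case: (h1 v)).
- by rewrite eS; case: (h1 (mate G v)).
- by rewrite eS; case: (h1 (mate G v)).
Qed.

Lemma mom_gam0 s t : gam0 G s t -> mom r a s = mom r a t.
Proof.
case: adm => _ [h2 [h3 _]].
case/orP => [/orP[/orP[|]|]|].
- by case/existsP => v /andP[/eqP -> /eqP ->]; apply: h2.
- by case/andP => hl /eqP ->; apply: h3.
- case/existsP => v /existsP[i /and3P[hv /eqP -> /eqP ->]].
  exact: mom_corner.
- by case/andP => /eqP -> /eqP ->.
Qed.

Lemma mom_gam s t : gam G s t -> mom r a s = mom r a t.
Proof. by case/orP => [/mom_gam0 //| /mom_gam0 ->]. Qed.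

Lemma mom_connect s t : connect (gam G) s t -> mom r a s = mom r a t.
Proof.
case/connectP => p; elim: p s => [|x p IH] s /= ; first by move=> _ ->.
by case/andP => /mom_gam -> hp ht; apply: IH.
Qed.

End Main.

Section Faces.
Variables (n : nat) (G : graph n) (R : realType).

Definition fs (s : slot n) : {set slot n} := [set t | connect (gam G) s t].
Lemma gam_sym : symmetric (gam G). Proof. by move=> s t; rewrite /gam orbC. Qed.
Lemma conn_sym : connect_sym (gam G). Proof. exact: sym_connect_sym gam_sym. Qed.
Lemma fs_in s : fs s \in faces G. Proof. by apply: imset_f. Qed.
Lemma fs_eqP s t : (fs s == fs t) = connect (gam G) s t.
Proof.
apply/eqP/idP => [e|c].
  have : t \in fs t by rewrite inE connect0.
  by rewrite -e inE.
apply/setP => x; rewrite !inE; apply/idP/idP => h.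
  by apply: connect_trans h; rewrite conn_sym.
exact: connect_trans c h.
Qed.

Definition fidx (s : slot n) : 'I_#|faces G| := enum_rank_in (fs_in s) (fs s).
Lemma fidxK s : enum_val (fidx s) = fs s.
Proof. by rewrite /fidx enum_rankK_in // fs_in. Qed.
Lemma fidx_surj (f : 'I_#|faces G|) : exists s, f = fidx s.
Proof.
have := enum_valP f; case/imsetP => s _ e; exists s.
apply: enum_val_inj; rewrite fidxK; exact: e.
Qed.
Lemma fidx_eq s t : (fidx s == fidx t) = connect (gam G) s t.
Proof.
rewrite -fs_eqP; apply/eqP/eqP => [e|e].
  by rewrite -!fidxK e.
by apply: enum_val_inj; rewrite !fidxK.
Qed.
Lemma in_face (f : 'I_#|faces G|) s : (s \in enum_val f) = (f == fidx s).
Proof.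
have [s0 ->] := fidx_surj f.
by rewrite fidxK inE fidx_eq.
Qed.

Definition sgn (i : 'I_4) : R := if (val i < 2)%N then 1 else -1.

Lemma E_apply (m : 'rV[R]_#|faces G|) (w : 'I_#|wavy G|) :
  (m *m (Emat G R)^T) 0 w =
  \sum_(i < 4) sgn i * m 0 (fidx (At (enum_val w) i)).
Proof.
rewrite !mxE.
under eq_bigr => f _ do rewrite !mxE /Eentry big_distrr big_mkcond /=.
rewrite exchange_big /=; apply: eq_bigr => i _.
rewrite (bigD1 (fidx (At (enum_val w) i))) //= big1 ?addr0.
  by rewrite in_face eqxx /sgn mulrC.
by move=> f /negbTE hf; rewrite in_face hf.
Qed.

Definition rep (f : 'I_#|faces G|) : slot n := odflt (Rt true) [pick s in enum_val f].

Lemma rep_conn s : connect (gam G) s (rep (fidx s)).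
Proof.
rewrite /rep; case: pickP => [t|] /=.
  by rewrite fidxK inE.
by move/(_ s); rewrite fidxK inE connect0.
Qed.

Definition mvec (r : nat) (a : attribution n) : 'rV[R]_#|faces G| :=
  \row_f (mom r a (rep f))%:R.

Lemma mvecE r a s : admissible G r a -> mvec r a 0 (fidx s) = (mom r a s)%:R.
Proof. by move=> adm; rewrite mxE -(mom_connect adm (rep_conn s)). Qed.

End Faces.

Section Kernel.
Variables (n : nat) (G : graph n) (R : realType).

Lemma sum4 (F : 'I_4 -> R) : \sum_(i < 4) F i =
  F (inord 0) + F (inord 1) + F (inord 2) + F (inord 3).
Proof.
rewrite !big_ord_recr big_ord0 /= add0r.
by congr (_ + _ + _ + _); congr F; apply: val_inj; rewrite /= ?inordK.
Qed.

Lemma momi_inord S j k (i : nat) (hi : (i < 4)%N) :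
  momi S j k (inord i) = momi S j k (Ordinal hi).
Proof. by have -> : inord i = Ordinal hi by apply: val_inj; rewrite /= inordK. Qed.

Lemma mvec_ker r a : admissible G r a -> mvec G R r a *m (Emat G R)^T = 0.
Proof.
move=> adm; apply/rowP => w; rewrite E_apply mxE sum4.
rewrite !(mvecE R _ adm) !momAt !momi_inord /momi /sgn /= !inordK //.
have [h1 h2] := adm_le adm (enum_val w).
rewrite !natrB // /=; lra.
Qed.

Lemma mom_ext r a b : admissible G r a -> admissible G r b ->
  (forall s, mom r a s = mom r b s) -> a = b.
Proof.
move=> ha hb e; apply/ffunP => v.
have e0 := e (At v (inord 0)); have e1 := e (At v (inord 1));
have e2 := e (At v (inord 2)).
rewrite !momAt !momi_inord /momi /= in e0 e1 e2.
have [h1 h2] := adm_le ha v; have [h3 h4] := adm_le hb v.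
move: e0 e1 e2 h1 h2 h3 h4; rewrite /aS /aj /ak.
case: (a v) => [[S j] k]; case: (b v) => [[S' j'] k'] /= e0 e1 e2 h1 h2 h3 h4.
have -> : S = S' by lia.
by rewrite e0 e2.
Qed.

Lemma mvec_inj r a b : admissible G r a -> admissible G r b ->
  mvec G R r a = mvec G R r b -> a = b.
Proof.
move=> ha hb e; apply: (mom_ext ha hb) => s.
have := congr1 (fun m : 'rV[R]_#|faces G| => m 0 (fidx G s)) e; rewrite /= !mvecE //.
by move/eqP; rewrite eqr_nat => /eqP.
Qed.

End Kernel.

Section LinAlg.
Variable F : fieldType.

Lemma rank_col_indep m c (A : 'M[F]_(m, c)) (u : 'rV[F]_c) (x : 'cV[F]_c) :
  A *m x = 0 -> u *m x != 0 -> \rank (col_mx A u) = (\rank A).+1.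
Proof.
move=> hA hu.
have u0 : u != 0 by apply: contraNneq hu => ->; rewrite mul0mx.
have uA : ~~ (u <= A)%MS.
  by apply: contra hu => /submxP [z ->]; rewrite -mulmxA hA mulmx0.
have cap0 : \rank (A :&: u)%MS = 0%N.
  case/boolP: (u <= A :&: u)%MS => h.
    by exfalso; move/negP: uA; apply; apply: submx_trans h (capmxSl _ _).
  case: (mxrank_leqif_sup (capmxSr A u)) => le eqi.
  rewrite (negbTE h) rank_rV u0 in eqi le; move/eqP: eqi; lia.
rewrite -(addsmxE A u).1.
have := mxrank_sum_cap A u; rewrite cap0 rank_rV u0 addn0 => ->.
by rewrite addn1.
Qed.

Lemma coord_select c (W : 'M[F]_c) :
  exists f : 'I_(\rank W^T) -> 'I_c,
    forall x : 'rV[F]_c, (x <= W)%MS -> (forall i, x 0 (f i) = 0) -> x = 0.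
Proof.
pose g := maxrankfun W^T; exists g => x xW hx.
pose S : 'M[F]_(c, \rank W^T) := \matrix_(j, i) (j == g i)%:R.
have mulS (y : 'M[F]_(1, c)) i : (y *m S) 0 i = y 0 (g i).
  rewrite mxE (bigD1 (g i)) //= big1 ?addr0; first by rewrite mxE eqxx mulr1.
  by move=> l /negbTE hl; rewrite mxE hl mulr0.
have eS : rowsub g W^T = (W *m S)^T.
  apply/matrixP => i j; rewrite !mxE (bigD1 (g i)) //= big1 ?addr0.
    by rewrite mxE eqxx mulr1.
  by move=> l /negbTE hl; rewrite mxE hl mulr0.
have rWS : \rank (W *m S) = \rank W.
  have := maxrowsub_free W^T; rewrite /row_free eS => /eqP.
  by rewrite (mxrank_tr (W *m S)) => ->; apply: mxrank_tr.
have := mxrank_mul_ker W S; rewrite rWS => /eqP.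
rewrite -{2}[\rank W]addn0 eqn_add2l mxrank_eq0 => /eqP cap0.
have xS : x *m S = 0 by apply/rowP => i; rewrite mulS hx mxE.
have : (x <= W :&: kermx S)%MS by rewrite sub_capmx xW sub_kermx xS eqxx.
by rewrite cap0 submx0 => /eqP.
Qed.

End LinAlg.

Lemma corner_surj (c : 'I_8) (i : 'I_4) : exists i', corner_idx c i' = i.
Proof.
case: c => [[|[|[|[|[|[|[|[|c]]]]]]]] Hc] //;
case: i => [[|[|[|[|i]]]] Hi] //;
first [ by exists (inord 0); apply: val_inj; rewrite /corner_idx /= !inordK
      | by exists (inord 1); apply: val_inj; rewrite /corner_idx /= !inordK
      | by exists (inord 2); apply: val_inj; rewrite /corner_idx /= !inordK
      | by exists (inord 3); apply: val_inj; rewrite /corner_idx /= !inordK ].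
Qed.

Section Gam.
Variables (n : nat) (G : graph n).

Lemma gam_solid (v : 'I_n) : gam G (At v ord0) (par G v).
Proof.
apply/orP; left; apply/orP; left; apply/orP; left; apply/orP; left.
by apply/existsP; exists v; rewrite !eqxx.
Qed.

Lemma gam_corner (v : 'I_n) i : (v < mate G v)%N ->
  gam G (At v i) (At (mate G v) (corner_idx (prop G v) i)).
Proof.
move=> hv; apply/orP; left; apply/orP; left; apply/orP; right.
by apply/existsP; exists v; apply/existsP; exists i; rewrite hv !eqxx.
Qed.

Lemma gam_root : gam G (Rt true) (Rt false).
Proof. by apply/orP; left; apply/orP; right; rewrite !eqxx. Qed.

End Gam.

Lemma rank_mul_inj (K : fieldType) m c p (W : 'M[K]_(m, c)) (P : 'M[K]_(c, p)) :
  (forall x : 'rV[K]_c, (x <= W)%MS -> x *m P = 0 -> x = 0) ->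
  \rank (W *m P) = \rank W.
Proof.
move=> h; have := mxrank_mul_ker W P.
suff -> : \rank (W :&: kermx P)%MS = 0%N by rewrite addn0.
apply/eqP; rewrite mxrank_eq0 -submx0; apply/row_subP => i.
set y := row i _.
have yW : (y <= W)%MS := submx_trans (row_sub i _) (capmxSl _ _).
have yK : (y <= kermx P)%MS := submx_trans (row_sub i _) (capmxSr _ _).
rewrite sub_kermx in yK.
by rewrite (h y yW (eqP yK)) sub0mx.
Qed.

Section Dim.
Variables (n : nat) (G : graph n) (R : realType).
Hypothesis wf : graph_wf G.

Definition root : 'I_#|faces G| := fidx G (Rt true).
Definition eroot : 'rV[R]_#|faces G| := delta_mx 0 root.
Definition Bmat : 'M[R]_(#|faces G|, #|wavy G| + 1) := row_mx (Emat G R)^T eroot^T.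
Definition W0 : 'M[R]_#|faces G| := kermx Bmat.

Lemma fidx_Rt b : fidx G (Rt b) = root.
Proof.
apply/eqP; rewrite fidx_eq; case: b; first exact: connect0.
by rewrite conn_sym; apply: connect1; apply: gam_root.
Qed.

Lemma mul_eroot (m : 'rV[R]_#|faces G|) : m *m eroot^T = (m 0 root)%:M.
Proof.
apply/matrixP => i j; rewrite !ord1 !mxE (bigD1 root) //= big1 ?addr0.
  by rewrite !mxE !eqxx mulr1.
by move=> f hf; rewrite !mxE (negbTE hf) andbF mulr0.
Qed.

Lemma mvec_root r a : admissible G r a -> mvec G R r a 0 root = r%:R.
Proof. by move=> h; rewrite /root mvecE. Qed.

Lemma diff_W0 r a b : admissible G r a -> admissible G r b ->
  (mvec G R r a - mvec G R r b <= W0)%MS.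
Proof.
move=> ha hb; rewrite sub_kermx /Bmat mul_mx_row !mulmxBl !mvec_ker //.
by rewrite !mul_eroot (mvec_root ha) (mvec_root hb) !subrr row_mx0.
Qed.

Lemma W0_E (x : 'rV[R]_#|faces G|) : (x <= W0)%MS -> x *m (Emat G R)^T = 0.
Proof.
rewrite sub_kermx /Bmat mul_mx_row => /eqP.
by rewrite -row_mx0 => /eq_row_mx [].
Qed.

Lemma W0_root (x : 'rV[R]_#|faces G|) : (x <= W0)%MS -> x 0 root = 0.
Proof.
rewrite sub_kermx /Bmat mul_mx_row => /eqP.
rewrite -row_mx0 => /eq_row_mx [_]; rewrite mul_eroot => /matrixP /(_ 0 0).
by rewrite !mxE eqxx mulr1n.
Qed.

Lemma ones_E : (Emat G R) *m (const_mx 1 : 'cV[R]_#|faces G|) = 0.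
Proof.
have h : (const_mx 1 : 'cV[R]_#|faces G|)^T *m (Emat G R)^T = 0.
  by apply/rowP => w'; rewrite E_apply mxE sum4 !mxE /sgn /= !inordK //=; lra.
by rewrite -[Emat G R]trmxK -[const_mx 1]trmxK -trmx_mul h trmx0.
Qed.

Lemma rankB : \rank Bmat = (R_G G R).+1.
Proof.
rewrite -mxrank_tr /Bmat tr_row_mx trmxK.
apply: (rank_col_indep (x := const_mx 1)); first exact: ones_E.
apply/negP => /eqP /matrixP /(_ 0 0).
rewrite !mxE (bigD1 root) //= big1 ?addr0.
  by rewrite !mxE !eqxx mulr1 => /eqP; rewrite oner_eq0.
by move=> f hf; rewrite !mxE (negbTE hf) andbF mul0r.
Qed.

Lemma rankW0 : \rank W0 = (#|faces G| - (R_G G R).+1)%N.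
Proof. by rewrite mxrank_ker rankB. Qed.

Lemma wavy_card : (#|wavy G| * 2)%N = n.
Proof.
have mateK : involutive (mate G) := wf_mate2 wf.
have eC : ~: wavy G = mate G @: wavy G.
  apply/setP => v; rewrite !inE; apply/idP/imsetP.
    move=> hv; exists (mate G v); last by rewrite mateK.
    rewrite inE mateK; have := wf_mate1 wf v; rewrite -val_eqE /=.
    by move: hv; rewrite -leqNgt => h1 h2; rewrite ltn_neqAle h1 andbT; exact: h2.
  by case => u; rewrite inE => hu ->; rewrite mateK -leqNgt; exact: ltnW.
have := cardsC (wavy G); rewrite eC card_imset; last exact: can_inj mateK.
by rewrite card_ord muln2 -addnn.
Qed.

End Dim.

Section Dim2.
Variables (n : nat) (G : graph n) (R : realType).
Hypothesis wf : graph_wf G.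
Hypothesis hn : (0 < n)%N.

Let v0 : 'I_n := Ordinal hn.

Lemma par_v0 : exists b, par G v0 = Rt b.
Proof.
case e: (par G v0) => [b | [u i]]; first by exists b.
by have := wf_heap wf e.
Qed.

Lemma fidx_v0 : fidx G (At v0 ord0) = root G.
Proof.
have [b eb] := par_v0; rewrite -(fidx_Rt G b) -eb.
by apply/eqP; rewrite fidx_eq; apply: connect1; apply: gam_solid.
Qed.

Lemma v0_wavy : v0 \in wavy G.
Proof. by rewrite inE; have := wf_mate1 wf v0; rewrite -val_eqE /= lt0n. Qed.

Definition Pmat (i : 'I_4) : 'M[R]_(#|faces G|, #|wavy G|) :=
  \matrix_(f, om) (f == fidx G (At (enum_val om) i))%:R.

Lemma mulP (x : 'rV[R]_#|faces G|) i om :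
  (x *m Pmat i) 0 om = x 0 (fidx G (At (enum_val om) i)).
Proof.
rewrite mxE (bigD1 (fidx G (At (enum_val om) i))) //= big1 ?addr0.
  by rewrite mxE eqxx mulr1.
by move=> f hf; rewrite mxE (negbTE hf) mulr0.
Qed.

Definition PP := row_mx (row_mx (Pmat (inord 0)) (Pmat (inord 1))) (Pmat (inord 2)).

Lemma kerPP (x : 'rV[R]_#|faces G|) : (x <= W0 G R)%MS -> x *m PP = 0 -> x = 0.
Proof.
move=> xW; rewrite /PP !mul_mx_row -!row_mx0 => /eq_row_mx [/eq_row_mx [x0 x1] x2].
have mateK : involutive (mate G) := wf_mate2 wf.
have xE := W0_E xW; have xr := W0_root xW.
have zw u : u \in wavy G -> forall i, x 0 (fidx G (At u i)) = 0.
  move=> hu i; set om := enum_rank_in hu u.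
  have eu : enum_val om = u := enum_rankK_in hu hu.
  have h0 : x 0 (fidx G (At u (inord 0))) = 0.
    by move/rowP/(_ om): x0; rewrite mulP mxE eu.
  have h1 : x 0 (fidx G (At u (inord 1))) = 0.
    by move/rowP/(_ om): x1; rewrite mulP mxE eu.
  have h2 : x 0 (fidx G (At u (inord 2))) = 0.
    by move/rowP/(_ om): x2; rewrite mulP mxE eu.
  have h3 : x 0 (fidx G (At u (inord 3))) = 0.
    move/rowP/(_ om): xE; rewrite E_apply mxE sum4 eu h0 h1 h2 /sgn /= !inordK //=.
    by rewrite !mulr0 !add0r mulN1r => /eqP; rewrite oppr_eq0 => /eqP.
  rewrite -(inord_val i); case: i => [[|[|[|[|i]]]] Hi] //.
apply/rowP => f; have [s ->] := fidx_surj f; rewrite mxE.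
case: s => [b | [u i]]; first by rewrite fidx_Rt.
case/boolP: (u \in wavy G) => hu; first exact: zw.
set v := mate G u.
have hv : v \in wavy G.
  rewrite inE /v mateK; move: hu; rewrite inE -leqNgt => h1.
  by rewrite ltn_neqAle h1 andbT; exact: (wf_mate1 wf u).
have [i' ei] := corner_surj (prop G v) i.
have -> : fidx G (At u i) = fidx G (At v i').
  apply/eqP; rewrite fidx_eq conn_sym; apply: connect1.
  have hv' : (v < mate G v)%N by move: hv; rewrite inE.
  have := @gam_corner n G v i' hv'; rewrite ei /v mateK; exact.
exact: zw.
Qed.

Lemma rankW0_le : ((\rank (W0 G R)).+1 <= #|wavy G| + #|wavy G| + #|wavy G|)%N.
Proof.
set w := #|wavy G|.
pose om0 := enum_rank_in v0_wavy v0.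
pose c0 : 'I_(w + w + w) := lshift w (lshift w om0).
pose u : 'rV[R]_(w + w + w) := delta_mx 0 c0.
have uE (y : 'rV[R]_(w + w + w)) : y *m u^T = (y 0 c0)%:M.
  apply/matrixP => i j; rewrite !ord1 !mxE (bigD1 c0) //= big1 ?addr0.
    by rewrite !mxE !eqxx mulr1.
  by move=> f hf; rewrite !mxE (negbTE hf) andbF mulr0.
have PPc (y : 'rV[R]_#|faces G|) : (y *m PP) 0 c0 = y 0 (root G).
  rewrite /PP !mul_mx_row /c0 !row_mxEl mulP.
  by rewrite (enum_rankK_in v0_wavy v0_wavy) (_ : inord 0 = ord0) ?fidx_v0 //;
    apply: val_inj; rewrite /= inordK.
rewrite -(rank_mul_inj kerPP) -(rank_col_indep (A := W0 G R *m PP) (u := u) (x := u^T)).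
- exact: rank_leq_col.
- apply/row_matrixP => i; rewrite row0 row_mul (row_mul i (W0 G R)) uE PPc.
  rewrite (W0_root (x := row i (W0 G R)) (row_sub i _)).
  by apply/matrixP => p q; rewrite !mxE mul0rn.
- rewrite uE; apply/negP => /eqP/matrixP/(_ 0 0).
  by rewrite !mxE !eqxx /= mulr1n => /eqP; rewrite oner_eq0.
Qed.

End Dim2.

Section Frontier.
Variables (n : nat) (G : graph n).
Hypothesis wf : graph_wf G.
Variables (r : nat) (a : attribution n).
Hypothesis adm : admissible G r a.
Local Open Scope nat_scope.

Definition owner_lt (s : slot n) (t : nat) : bool :=
  match s with inl _ => true | inr (u, _) => (u < t)%N end.
Definition Qf (t : nat) (s : slot n) : bool := [forall w : 'I_n, (w < t)%N ==> (par G w != s)].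
Definition Cf (t : nat) : pred (slot n) := fun s => [&& hang_slot s, owner_lt s t & Qf t s].
Definition Phi (t : nat) : nat := \sum_(s | Cf t s) mom r a s.

Lemma sum_ind (P : pred (slot n)) (f : slot n -> nat) :
  \sum_(s | P s) f s = \sum_s (P s) * f s.
Proof. by rewrite big_mkcond; apply: eq_bigr => s _; case: (P s); rewrite ?mul1n. Qed.

Lemma Qf_S (t : 'I_n) s : Qf t.+1 s = Qf t s && (par G t != s).
Proof.
apply/forallP/andP => [h|[/forallP h1 h2] w].
  split; first by apply/forallP => w; apply/implyP => hw; have := h w; rewrite ltnS ltnW.
  by have := h t; rewrite ltnSn.
apply/implyP; rewrite ltnS leq_eqVlt => /orP[/eqP e|hw].
  by have -> : w = t by apply: val_inj.
by have := h1 w; rewrite hw.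
Qed.

Lemma owner_par (t : 'I_n) : owner_lt (par G t) t.
Proof. by case e: (par G t) => [b|[u i]] //=; apply: (wf_heap wf e). Qed.

Lemma par_in_C (t : 'I_n) : Cf t (par G t).
Proof.
rewrite /Cf wf_hang // owner_par /=.
apply/forallP => w; apply/implyP => hw; apply/negP => /eqP /(wf_parinj wf) e.
by move: hw; rewrite e ltnn.
Qed.

Lemma inr_eq (A B : eqType) (x y : B) : (@inr A B x == inr y) = (x == y).
Proof. by apply/eqP/eqP => [[]|->]. Qed.

Lemma i_ne0 (i : 'I_4) : (val i != 0) = (i == inord 1) + (i == inord 2) + (i == inord 3) :> nat.
Proof.
have e k (hk : k < 4) : inord k = Ordinal hk :> 'I_4 by apply: val_inj; rewrite /= inordK.
rewrite (e 1 isT) (e 2 isT) (e 3 isT).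
by case: i => [[|[|[|[|k]]]] Hk].
Qed.

Lemma C_step (t : 'I_n) s :
  (Cf t.+1 s + (s == par G t) =
   Cf t s + ((s == At t (inord 1)) + (s == At t (inord 2)) + (s == At t (inord 3))))%N.
Proof.
have Ct := par_in_C t.
rewrite /Cf Qf_S.
case: (eqVneq s (par G t)) => [->|hs].
  move: Ct; rewrite /Cf => ->; rewrite /= !andbF.
  have : forall k, par G t != At t k.
    move=> k; apply/eqP => e; have := owner_par t; rewrite e /= ltnn //.
  by move=> h; rewrite !(negbTE (h _)).
rewrite /= andbT addn0.
case: s hs => [b|[u i]] hs /=; first by rewrite !addn0.
have Qt : Qf t (At t i).
  apply/forallP => w; apply/implyP => hw; apply/eqP => e.
  by have := wf_heap wf e; rewrite ltnNge ltnW.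
rewrite /At !inr_eq !xpair_eqE.
case: (ltngtP u t) => hut.
- have -> : (u == t) = false by apply/eqP => e; move: hut; rewrite e ltnn.
  by rewrite ltnS (ltnW hut) /= !addn0.
- have -> : (u == t) = false by apply/eqP => e; move: hut; rewrite e ltnn.
  by rewrite ltnS leqNgt hut /= !andbF.
- have eu : u = t by apply: val_inj.
  subst u; have Qt' : Qf t (inr (t, i)) := Qt.
  rewrite ltnSn eqxx /= Qt' andbT andbF add0n.
  exact: i_ne0.
Qed.

Lemma sum_eq1 (x : slot n) : mom r a x = \sum_s (s == x) * mom r a s.
Proof.
by rewrite (bigD1 x) //= eqxx mul1n big1 ?addn0 // => s /negbTE ->.
Qed.

Lemma Phi_step (t : 'I_n) :
  (Phi t.+1 + mom r a (par G t) =
   Phi t + (mom r a (At t (inord 1)) + mom r a (At t (inord 2)) + mom r a (At t (inord 3))))%N.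
Proof.
rewrite /Phi (sum_ind (Cf t.+1)) (sum_ind (Cf t)) !(sum_eq1 (par G t)) !(sum_eq1 (At _ _)).
rewrite -!big_split /=; apply: eq_bigr => s _.
by rewrite -!mulnDl C_step.
Qed.

Lemma Phi_mono (t : 'I_n) : Phi t <= Phi t.+1.
Proof.
have := Phi_step t; case: adm => _ [h2 _].
rewrite -(h2 t) !momAt /momi /= !inordK //.
have [h3 h4] := adm_le adm t; lia.
Qed.

Lemma Phi_le_aux k (t : nat) : k + t <= n -> Phi t <= Phi (k + t).
Proof.
elim: k => [|k IH] h //.
apply: leq_trans (IH (ltnW h)) _.
have hk : k + t < n by rewrite -addSn.
by have := Phi_mono (Ordinal hk); rewrite addSn.
Qed.

Lemma Phi_le (t : nat) : t <= n -> Phi t <= Phi n.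
Proof. by move=> ht; rewrite -(subnK ht); apply: Phi_le_aux; rewrite subnK. Qed.

Lemma sum2 (P : pred (slot n)) (x y : slot n) : x != y -> P x -> P y ->
  mom r a x + mom r a y <= \sum_(s | P s) mom r a s.
Proof.
move=> hxy px py; rewrite (bigD1 x) //= (bigD1 y) /=; last by rewrite py eq_sym hxy.
by rewrite addnA leq_addr.
Qed.

Definition Lsum : nat := \sum_(s | is_leaf G s) mom r a s.

Lemma Phi_n : Phi n = 2 * Lsum.
Proof.
rewrite /Phi.
have -> : \sum_(s | Cf n s) mom r a s = \sum_(s | is_halfedge G s) mom r a s.
  apply: eq_bigl => s; rewrite /Cf /is_halfedge.
  have -> : owner_lt s n by case: s => [b|[u i]] //=.
  congr (_ && _); apply/forallP/forallP => h w; first by have := h w; rewrite ltn_ord.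
  by rewrite ltn_ord h.
rewrite (bigID (slot_type G)) /=.
have -> : \sum_(s | is_halfedge G s && slot_type G s) mom r a s = Lsum by [].
have -> : \sum_(s | is_halfedge G s && ~~ slot_type G s) mom r a s = Lsum.
  have eS : [set t | is_antileaf G t] = dsh G @: [set s | is_leaf G s].
    apply/setP => t; rewrite inE; apply/idP/imsetP.
      by move=> /(wf_dsurj wf) [s hs <-]; exists s; rewrite ?inE.
    by case=> s; rewrite inE => hs ->; apply: wf_dl.
  have -> : \sum_(s | is_halfedge G s && ~~ slot_type G s) mom r a s =
    \sum_(t in [set t | is_antileaf G t]) mom r a t by apply: eq_bigl => t; rewrite inE.
  rewrite eS big_imset /=; last by move=> x y; rewrite !inE; apply: (wf_dinj wf).
  rewrite /Lsum; apply: eq_big => [s|s hs]; first by rewrite inE.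
  by case: adm => _ [_ [h3 _]]; rewrite -h3 //; move: hs; rewrite inE.
by rewrite mul2n addnn.
Qed.

Lemma S_le (v : 'I_n) : aS a v <= 2 * Lsum.
Proof.
rewrite -Phi_n; apply: leq_trans (Phi_le (ltn_ord v)).
have e : aS a v = mom r a (At v (inord 2)) + mom r a (At v (inord 3)).
  rewrite !momAt /momi /= !inordK //; have [_ h] := adm_le adm v; lia.
rewrite e; apply: sum2.
- by apply/eqP => /(congr1 (fun s : slot n => if s is inr (_, i) then val i else 0)) /=; rewrite !inordK.
- rewrite /Cf /= inordK // ltnSn /=; apply/forallP => w; apply/implyP => hw.
  by apply/eqP => e'; have := wf_heap wf e'; rewrite ltnNge -ltnS hw.
- rewrite /Cf /= inordK // ltnSn /=; apply/forallP => w; apply/implyP => hw.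
  by apply/eqP => e'; have := wf_heap wf e'; rewrite ltnNge -ltnS hw.
Qed.

Lemma r_le : r <= Lsum.
Proof.
have : 2 * r <= 2 * Lsum.
  rewrite -Phi_n; apply: leq_trans (Phi_le (leq0n n)).
  rewrite mul2n -addnn; apply: (@sum2 (Cf 0) (Rt true) (Rt false)) => //.
  - by rewrite /Cf /=; apply/forallP.
  - by rewrite /Cf /=; apply/forallP.
by rewrite leq_pmul2l.
Qed.

Lemma mom_le2 s : mom r a s <= 2 * Lsum.
Proof.
case: s => [b|[v i]]; first by have := r_le; rewrite /=; lia.
exact: leq_trans (mom_le_S adm v i) (S_le v).
Qed.

End Frontier.

Lemma geom_le (R : realType) (q : R) (M : nat) : 0 <= q < 1 ->
  \sum_(j < M) q ^+ j <= (1 - q)^-1.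
Proof.
case/andP => q0 q1.
have hq : 0 < 1 - q by rewrite subr_gt0.
rewrite -[X in _ <= X]mulr1 ler_pdivlMl //.
have e := subrX1 q M.
have -> : (1 - q) * \sum_(j < M) q ^+ j = 1 - q ^+ M.
  by rewrite -opprB mulNr -e opprB.
by rewrite lerBlDr lerDl exprn_ge0.
Qed.

Lemma sum_uniq_le (R : realType) (T : finType) (l : seq T) (h : T -> R) :
  uniq l -> (forall x, 0 <= h x) -> \sum_(x <- l) h x <= \sum_x h x.
Proof.
move=> ul h0; rewrite big_uniq // [X in _ <= X](bigID (fun x => x \in l)) /=.
by rewrite lerDl sumr_ge0.
Qed.

Lemma esum_inj_bound (R : realType) (T : choiceType) (D : set T) (k : nat)
    (phi : T -> 'I_k -> nat) (g : T -> R) (q c : R) :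
  0 <= q < 1 -> 0 <= c ->
  (forall a b, D a -> D b -> (forall i, phi a i = phi b i) -> a = b) ->
  (forall a, D a -> 0 <= g a <= c * \prod_i q ^+ phi a i) ->
  (esum D (fun a => (g a)%:E) <= (c * ((1 - q)^-1) ^+ k)%:E)%E.
Proof.
move=> hq c0 inj hg.
have q0 : 0 <= q by case/andP: hq.
apply: ge_ereal_sup => _ [X [finX XD] <-].
rewrite fsbig_finite //= sumEFin lee_fin.
set s := (fset_set X : seq T).
have sD x : x \in s -> D x.
  move=> hx; apply: XD; have := in_fset_set finX x; rewrite hx => /esym.
  by move=> h; apply/set_mem; exact: h.
have us : uniq s by apply: fset_uniq.
apply: le_trans (_ : \sum_(x <- s) c * \prod_i q ^+ phi x i <= _).
  rewrite big_seq_cond [X in _ <= X]big_seq_cond; apply: ler_sum => x /andP[hx _].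
  by case/andP: (hg x (sD x hx)).
rewrite -mulr_sumr ler_wpM2l //.
pose M := (\max_(x <- s) \max_(i < k) phi x i).+1.
have phiM x i : x \in s -> (phi x i < M)%N.
  move=> hx; rewrite ltnS.
  have h1 := @leq_bigmax _ (fun i => phi x i) i.
  have h2 := @leq_bigmax_seq _ s xpredT (fun x => \max_(i < k) phi x i) x hx isT.
  exact: leq_trans h1 h2.
pose psi x : {ffun 'I_k -> 'I_M} := [ffun i => inord (phi x i)].
pose h (y : {ffun 'I_k -> 'I_M}) := \prod_i q ^+ (val (y i)).
have e1 : \sum_(x <- s) \prod_i q ^+ phi x i = \sum_(x <- s) h (psi x).
  rewrite big_seq [in RHS]big_seq; apply: eq_bigr => x hx; apply: eq_bigr => i _.
  by rewrite ffunE /= inordK // phiM.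
rewrite e1 -(big_map psi predT h).
apply: le_trans (sum_uniq_le _ _) _.
- rewrite map_inj_in_uniq // => x y hx hy e; apply: (inj _ _ (sD _ hx) (sD _ hy)) => i.
  have := congr1 (fun f : {ffun 'I_k -> 'I_M} => val (f i)) e; rewrite /= !ffunE /= !inordK //; exact: phiM.
- by move=> y; apply: prodr_ge0 => i _; apply: exprn_ge0.
rewrite /h -(bigA_distr_bigA (fun (i : 'I_k) (j : 'I_M) => q ^+ val j)) /=.
have -> : (1 - q)^-1 ^+ k = \prod_(i < k) (1 - q)^-1 by rewrite prodr_const card_ord.
apply: ler_prod => i _.
rewrite sumr_ge0 /=; last by move=> j _; apply: exprn_ge0.
exact: (geom_le M hq).
Qed.

Unset Implicit Arguments.

Theorem proposition2 (R : realType) (n r : nat) (p : R) (G : graph n) :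
  (2 <= n)%N -> ~~ odd n -> 0 < p < 1 -> graph_wf G ->
  (amplitude G p r <=
     (((4 * n)%:R ^+ (3 * n./2 - 1)) * powR p (r%:R / (4 * n)%:R)
       * Nof p ^ (- degree G R))%:E)%E.
Proof.
move=> hn2 hev /andP[p0 p1] wf.
have hn : (0 < n)%N by apply: leq_trans hn2.
have [f hf] := coord_select (W0 G R).
set k := \rank (W0 G R)^T in f hf.
have hRF : ((R_G G R).+1 <= #|faces G|)%N.
  by rewrite -(rankB G R); apply: rank_leq_row.
have hk : k = (#|faces G| - (R_G G R).+1)%N by rewrite /k mxrank_tr rankW0.
have hw : n./2 = #|wavy G| by have e := wavy_card wf; rewrite -[in LHS]e muln2 doubleK.
have hk2 : (k.+1 <= 3 * n./2)%N.
  by rewrite /k mxrank_tr hw; apply: leq_trans (rankW0_le R wf hn) _; lia.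
pose m := (4 * n)%N.
have m0 : 0 < m%:R :> R by rewrite ltr0n /m; lia.
pose q := p `^ (m%:R)^-1.
have q0 : 0 <= q by apply: powR_ge0.
have qm : q ^+ m = p.
  by rewrite -powR_mulrn // -powRrM mulVf ?powRr1 ?ltW // gt_eqF.
have q1 : q < 1.
  by have := (expr_lte1 R).2 m q (ltac:(rewrite /m; lia)) q0; rewrite qm p1 => <-.
have hq : 0 <= q < 1 by rewrite q0 q1.
have km : (1 + 2 * k <= m)%N.
  by move: hk2; have e := wavy_card wf; rewrite hw /m -[in X in (_ <= 4 * X)%N]e; lia.
have hE : (esum [set a : attribution n | admissible G r a]
      (fun a => (\prod_(s : slot n | is_leaf G s) p ^+ mom r a s)%:E)
    <= (q ^+ r * ((1 - q)^-1) ^+ k)%:E)%E.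
  have H := (@esum_inj_bound R (attribution n) [set a : attribution n | admissible G r a] k (fun a i => mom r a (rep (f i))) (fun a => \prod_(s : slot n | is_leaf G s) p ^+ mom r a s) q (q ^+ r) hq (exprn_ge0 _ q0)).
  apply: H.
  - move=> a b ha hb e; apply: (mvec_inj (R := R) ha hb).
    apply/eqP; rewrite -subr_eq0; apply/eqP; apply: hf; first exact: diff_W0.
    by move=> i; rewrite !mxE e subrr.
  - move=> a ha; apply/andP; split; first by apply: prodr_ge0 => s _; apply: exprn_ge0; apply: ltW.
    rewrite prodrXr -qm -exprM prodrXr -exprD.
    apply: ler_wiXn2l => //; first exact: ltW.
    have h1 := r_le wf ha.
    have h2 : (\sum_(i < k) mom r a (rep (f i)) <= k * (2 * Lsum G r a))%N.
      rewrite -[k in (k * _)%N]card_ord -sum_nat_const; apply: leq_sum => i _.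
      exact: mom_le2.
    apply: (@leq_trans ((1 + 2 * k) * Lsum G r a)); last by rewrite leq_mul2r km orbT.
    have e : (2 * k * Lsum G r a = k * (2 * Lsum G r a))%N by rewrite mulnA (mulnC 2).
    by rewrite mulnDl mul1n e; apply: leq_add h1 h2.
set N := Nof p.
have hN : 0 < N by rewrite /N /Nof invr_gt0 subr_gt0.
have e1 : q ^+ r = p `^ (r%:R / (4 * n)%:R).
  by rewrite -powR_mulrn // -powRrM mulrC.
have s1 : \sum_(i < m) q ^+ i <= m%:R.
  apply: le_trans (_ : _ <= \sum_(i < m) (1 : R)) _.
    by apply: ler_sum => i _; apply: exprn_ile1 => //; exact: ltW.
  by rewrite sumr_const card_ord.
have s2 : 1 - p <= (1 - q) * m%:R.
  have := subrX1 q m; rewrite qm => e.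
  have -> : 1 - p = (1 - q) * \sum_(i < m) q ^+ i by rewrite -opprB e -mulNr opprB.
  by apply: ler_wpM2l => //; rewrite subr_ge0 ltW.
have e2 : (1 - q)^-1 <= m%:R * N.
  rewrite /N /Nof ler_pdivlMr ?subr_gt0 // ler_pdivrMl ?subr_gt0 //.
have e3 : (m%:R : R) ^+ k <= m%:R ^+ (3 * n./2 - 1).
  rewrite ler_eXn2l; first by lia.
  by rewrite ltr1n /m; lia.
have hF : #|faces G| = (k + (R_G G R).+1)%N by rewrite hk subnK.
have e4 : N ^ (- degree G R) = N ^- n * N ^+ k.
  have -> : - degree G R = (k%:Z) + (- (n%:Z)).
    by rewrite /degree /F_G hF; lia.
  by rewrite expfzDr ?gt_eqF // -exprnN mulrC.
rewrite /amplitude.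
apply: le_trans (lee_wpmul2l _ hE) _.
  by rewrite lee_fin invr_ge0 exprn_ge0 // ltW.
rewrite -EFinM lee_fin e4 -e1 -/N.
have X : (1 - q)^-1 ^+ k <= m%:R ^+ (3 * n./2 - 1) * N ^+ k.
  apply: le_trans (_ : _ <= (m%:R * N) ^+ k) _.
    apply: lerXn2r => //; rewrite nnegrE ?invr_ge0 ?subr_ge0 ?ltW //.
    by rewrite mulr_gt0.
  rewrite exprMn; apply: ler_wpM2r => //; apply: exprn_ge0; exact: ltW.
have hNn : 0 <= N ^- n by rewrite invr_ge0 exprn_ge0 // ltW.
have hqr : 0 <= q ^+ r := exprn_ge0 _ q0.
apply: le_trans (ler_wpM2l hNn (ler_wpM2l hqr X)) _.
have comm4 (A B C D : R) : A * (B * (C * D)) = C * B * (A * D).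
  by ring.
by rewrite comm4.
Qed.
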